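(* Let $\chi:B_n\to D_n$ be the map with $\chi(w)=w$ if $w\in D_n$ and, if $w\notin D_n$, $\chi(w)$ is obtained from $w$ by changing the sign of its first entry $w_1$. The linear extension of $\chi$ maps $\Sigma(B_n)$ into $\Sigma(D_n)$, and the resulting map $\chi:\Sigma(B_n)\to\Sigma(D_n)$ is a morphism of algebras. Explicitly, for every $J\subseteq\{2,\dots,n-1\}$: $Y_J\mapsto Y_J$; $Y_{\{1\}\cup J}\mapsto Y_{\{1'\}\cup J}+Y_{\{1\}\cup J}+Y_{\{1',1\}\cup J}$; $Y_{\{0\}\cup J}\mapsto Y_J+Y_{\{1'\}\cup J}+Y_{\{1\}\cup J}$; $Y_{\{0,1\}\cup J}\mapsto Y_{\{1',1\}\cup J}$; equivalently, $X_J\mapsto X_J$; $X_{\{1\}\cup J}\mapsto X_{\{1',1\}\cup J}$; $X_{\{0\}\cup J}\mapsto X_{\{1'\}\cup J}+X_{\{1\}\cup J}$; $X_{\{0,1\}\cup J}\mapsto 2X_{\{1',1\}\cup J}$.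
   Context: Group algebras over $\mathbb{Q}$ with product composition. $B_n$: signed permutations $w=w_1\dots w_n$ (bijections of $\{\pm1,\dots,\pm n\}$ with $w(-i)=-w(i)$), values ordered $\cdots<-2<-1<1<2<\cdots$, $w_0=0$; $\mathrm{Des}(w)=\{i\in\{0,\dots,n-1\}:w_i>w_{i+1}\}$; in $\mathbb{Q}B_n$, $Y_J=\sum_{\mathrm{Des}(w)=J}w$ and $X_J=\sum_{I\subseteq J}Y_I$ for $J\subseteq\{0,\dots,n-1\}$; $\Sigma(B_n)=\mathrm{span}\{Y_J\}$. $D_n\subseteq B_n$: signed permutations with an even number of negative entries; the descent set of $w\in D_n$ is the subset of $\{1',1,2,\dots,n-1\}$ in which $1'$ is a descent iff $-w_1>w_2$ and $i\in[n-1]$ is a descent iff $w_i>w_{i+1}$; in $\mathbb{Q}D_n$, $Y_J=\sum_{\mathrm{Des}(w)=J}w$, $X_J=\sum_{I\subseteq J}Y_I$ for $J\subseteq\{1',1,\dots,n-1\}$, and $\Sigma(D_n)=\mathrm{span}\{Y_J\}$. *)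

(* Defs.v *)
From HB Require Import structures.
From mathcomp Require Import all_boot all_order all_fingroup all_algebra.
Set Implicit Arguments. Unset Strict Implicit. Unset Printing Implicit Defensive.
Import Order.TTheory GRing.Theory Num.Theory.
Local Open Scope ring_scope.

(* Signed permutations of [n]: a signed permutation w is encoded by the pair
   (s, e) with s : {perm 'I_n} and e : 'I_n -> bool, meaning that the entry in
   position i+1 (i : 'I_n) is  w_(i+1) = (-1)^(e i) * (s i + 1).
   Every bijection w of {+-1..+-n} with w(-i) = -w(i) is encoded uniquely. *)
Definition SP (n : nat) := ({perm 'I_n} * {ffun 'I_n -> bool})%type.

Definition ent n (w : SP n) (i : 'I_n) : int :=
  (if w.2 i then -1 else 1) * (nat_of_ord (w.1 i)).+1%:Z.

(* w_k for k : nat, with w_0 = 0 (and 0 out of range) *)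
Definition wv n (w : SP n) (k : nat) : int :=
  match k with
  | 0 => 0
  | k'.+1 => match (insub k' : option 'I_n) with Some i => ent w i | None => 0 end
  end.

Definition app n (w : SP n) (x : int) : int :=
  if 0 <= x then wv w `|x|%N else - wv w `|x|%N.

Definition is_comp n (w u v : SP n) : bool :=
  [forall i : 'I_n, ent w i == app u (ent v i)].

Definition sp1 n : SP n := (1%g, [ffun => false]).

(* rat^o is rat viewed as a left module over itself *)
Notation GA n := {ffun SP n -> rat^o} (only parsing).
Definition delta n (w : SP n) : GA n := [ffun v => (v == w)%:R].
Definition gmul n (f g : GA n) : GA n :=
  [ffun w => \sum_(p : SP n * SP n | is_comp w p.1 p.2) f p.1 * g p.2].
Definition gone n : GA n := delta (sp1 n).

(* Type B descents: Des(w) = {i in {0..n-1} : w_i > w_(i+1)}, w_0 = 0;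
   here i : 'I_n stands for i. *)
Definition DesB n (w : SP n) : {set 'I_n} := [set i : 'I_n | wv w i.+1 < wv w i].

Definition YB n (J : {set 'I_n}) : GA n := \sum_(w : SP n | DesB w == J) delta w.
Definition XB n (J : {set 'I_n}) : GA n := \sum_(I : {set 'I_n} | I \subset J) YB I.
Definition SigmaB n (f : GA n) : Prop :=
  exists c : {set 'I_n} -> rat, f = \sum_(J : {set 'I_n}) c J *: YB J.

(* D_n: signed permutations with an even number of negative entries.
   QD_n is viewed inside QB_n as the functions supported on D_n
   (D_n is a subgroup, so the product is the restriction of gmul). *)
Definition inD n (w : SP n) : bool := ~~ odd #|[set i : 'I_n | w.2 i]|.

(* Type D descent set, a subset of {1',1,...,n-1}.  ENCODING: i : 'I_n with
   val i = 0 stands for 1', and val i = k >= 1 stands for k. *)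
Definition DesD n (w : SP n) : {set 'I_n} :=
  [set i : 'I_n | if nat_of_ord i == 0%N then wv w 2 < - wv w 1
                  else wv w i.+1 < wv w i].

Definition YD n (J : {set 'I_n}) : GA n :=
  \sum_(w : SP n | inD w && (DesD w == J)) delta w.
Definition XD n (J : {set 'I_n}) : GA n := \sum_(I : {set 'I_n} | I \subset J) YD I.
Definition SigmaD n (f : GA n) : Prop :=
  exists c : {set 'I_n} -> rat, f = \sum_(J : {set 'I_n}) c J *: YD J.

Definition chi n (w : SP n) : SP n :=
  if inD w then w
  else (w.1, [ffun i : 'I_n => if nat_of_ord i == 0%N then ~~ w.2 i else w.2 i]).

Definition chiL n (f : GA n) : GA n := \sum_(w : SP n) f w *: delta (chi w).

Definition sN n (k : nat) : {set 'I_n} := [set i : 'I_n | nat_of_ord i == k].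
Arguments sN {n} k.

(* Main.v *)
Require Import Defs.
From HB Require Import structures.
From mathcomp Require Import all_boot all_order all_fingroup all_algebra.
From mathcomp Require Import zify.
Set Implicit Arguments. Unset Strict Implicit. Unset Printing Implicit Defensive.
Import Order.TTheory GRing.Theory Num.Theory.
Local Open Scope ring_scope.

Section S.
Variable n : nat.
Implicit Types (u v w : SP n).

Definition flip w : SP n :=
  (w.1, [ffun i : 'I_n => if nat_of_ord i == 0%N then ~~ w.2 i else w.2 i]).
Definition lflip w : SP n :=
  (w.1, [ffun i : 'I_n => if nat_of_ord (w.1 i) == 0%N then ~~ w.2 i else w.2 i]).
Definition s0z (x : int) : int := if (x == 1) || (x == -1) then - x else x.

Lemma chiE w : chi w = if inD w then w else flip w.
Proof. by []. Qed.

Lemma flipK : involutive flip.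
Proof. by case=> s e; rewrite /flip /=; congr (_,_); apply/ffunP=> i; rewrite !ffunE; case: ifP => H; rewrite H ?negbK. Qed.

Lemma lflipK : involutive lflip.
Proof. by case=> s e; rewrite /lflip /=; congr (_,_); apply/ffunP=> i; rewrite !ffunE; case: ifP => H; rewrite H ?negbK. Qed.

Lemma sgnN (b : bool) (x : int) : (if ~~ b then -1 else 1) * x = - ((if b then -1 else 1) * x).
Proof. by case: b; rewrite ?mulN1r ?mul1r ?opprK. Qed.

Lemma ent_flip w i : ent (flip w) i = if nat_of_ord i == 0%N then - ent w i else ent w i.
Proof. by rewrite /ent /= ffunE; have [h|h] := eqVneq (nat_of_ord i) 0%N; rewrite ?sgnN. Qed.

Lemma ent_lflip w i : ent (lflip w) i = s0z (ent w i).
Proof.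
by rewrite /ent /s0z /= ffunE; case: (nat_of_ord (w.1 i)) => [|m];
  case: (w.2 i) => /=; rewrite ?mulN1r ?mul1r ?opprK.
Qed.

Lemma wv_flip w k : wv (flip w) k = if k == 1%N then - wv w k else wv w k.
Proof.
case: k => [|k] //=; case: (ltnP k n) => hk.
  by rewrite (insubT (fun j => j < n)%N hk) ent_flip.
by rewrite insubF ?oppr0 ?if_same // ltnNge hk.
Qed.

Lemma wv_lflip w k : wv (lflip w) k = s0z (wv w k).
Proof.
case: k => [|k] //=; case: (ltnP k n) => hk.
  by rewrite (insubT (fun j => j < n)%N hk) ent_lflip.
by rewrite insubF // ltnNge hk.
Qed.

Lemma appN u x : app u (- x) = - app u x.
Proof.
rewrite /app abszN; have [->|x0] := eqVneq x 0; first by rewrite /= oppr0.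
rewrite oppr_ge0; case: (lerP 0 x) => h.
  by have -> : (x <= 0) = false by apply/negbTE; rewrite -ltNge lt_def x0 h.
by rewrite (ltW h) opprK.
Qed.

Lemma app_flip u x : app (flip u) x = app u (s0z x).
Proof.
rewrite /s0z; case: ifP => [/orP[/eqP->|/eqP->]|H]; rewrite /app !wv_flip //=.
- by rewrite opprK.
case: eqP => // h; exfalso; move: H h; case/boolP: (x == 1) => /eqP; case/boolP: (x == -1) => /eqP; lia.
Qed.

Lemma comp_flip w u v : is_comp (flip w) u (flip v) = is_comp w u v.
Proof.
apply: eq_forallb => i; rewrite !ent_flip; case: ifP => // _.
by rewrite appN eqr_opp.
Qed.

Lemma comp_lflip w u v : is_comp w (flip u) v = is_comp w u (lflip v).
Proof. by apply: eq_forallb => i; rewrite ent_lflip app_flip. Qed.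


Lemma oddcard (P : pred 'I_n) : odd #|[set i | P i]| = \big[addb/false]_i P i.
Proof.
rewrite cardsE -sum1_card big_mkcond /=.
apply: (big_rec2 (fun x y => odd x = y)) => // i b m _ <-; rewrite oddD -[P i]/(i \in P); by case: (i \in P).
Qed.

Lemma wv_ent v (j : 'I_n) : wv v (nat_of_ord j).+1 = ent v j.
Proof. by rewrite /= valK. Qed.

Lemma abs_ent v i : `|ent v i|%N = (v.1 i).+1.
Proof. by rewrite /ent; case: (v.2 i); rewrite ?mulN1r ?mul1r ?abszN. Qed.

Lemma ent_ge0 v i : (0 <= ent v i) = ~~ v.2 i.
Proof. by rewrite /ent; case: (v.2 i); rewrite ?mulN1r ?mul1r. Qed.

Lemma app_ent u v i :
  app u (ent v i) = (if v.2 i (+) u.2 (v.1 i) then -1 else 1) * (u.1 (v.1 i)).+1%:Z.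
Proof.
rewrite /app abs_ent wv_ent ent_ge0 /ent; case: (v.2 i) => /=;
  by case: (u.2 (v.1 i)); rewrite ?mulN1r ?mul1r ?opprK.
Qed.

Lemma sgn_inj (a b : bool) (m k : nat) :
  (if a then -1 else 1) * (m.+1)%:Z = (if b then -1 else 1) * (k.+1)%:Z -> a = b.
Proof. by case: a; case: b; rewrite ?mulN1r ?mul1r //; lia. Qed.

Lemma comp_sign w u v i : is_comp w u v -> w.2 i = v.2 i (+) u.2 (v.1 i).
Proof. by move/forallP/(_ i)/eqP; rewrite app_ent {1}/ent => /sgn_inj. Qed.

Lemma odd_comp w u v : is_comp w u v ->
  odd #|[set i | w.2 i]| = odd #|[set i | u.2 i]| (+) odd #|[set i | v.2 i]|.
Proof.
move=> h; rewrite !oddcard.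
rewrite (eq_bigr (fun i => v.2 i (+) u.2 (v.1 i))); last by move=> i _; exact: comp_sign.
rewrite big_split /= addbC; congr (_ (+) _).
by rewrite [RHS](reindex_inj (@perm_inj _ v.1)).
Qed.

Lemma inD_comp w u v : is_comp w u v -> inD w = (inD u == inD v).
Proof. by move=> h; rewrite /inD (odd_comp h); case: odd; case: odd. Qed.

Variable Hn : (1 < n)%N.
Definition i0 : 'I_n := Ordinal (ltnW Hn).
Definition i1 : 'I_n := Ordinal Hn.

Lemma inD_flip w : inD (flip w) = ~~ inD w.
Proof.
rewrite /inD !oddcard /=.
rewrite (eq_bigr (fun i => w.2 i (+) (i == i0))); last first.
  by move=> i _; rewrite ffunE -[i == i0]val_eqE /=; case: eqP => _; rewrite ?addbT ?addbF.
rewrite big_split /=.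
have -> : \big[addb/false]_(i < n) (i == i0) = true.
  by rewrite (bigD1 i0) //= big1 // => i /negbTE.
by rewrite addbT.
Qed.

Lemma flip_neq w : flip w != w.
Proof.
apply/eqP; case: w => s e [] /ffunP /(_ i0); rewrite ffunE /=.
by case: (e i0).
Qed.

Lemma inD_chi w : inD (chi w).
Proof. by rewrite chiE; case: ifP => h //; rewrite inD_flip h. Qed.

Lemma scb (a : rat^o) (b : bool) : a *: (b%:R : rat^o) = if b then a else 0.
Proof. by case: b; rewrite /= ?scaler0 // -[a in RHS]mulr1. Qed.

Lemma chiLE (f : GA n) v : chiL f v = if inD v then f v + f (flip v) else 0.
Proof.
rewrite /chiL sum_ffunE.
under eq_bigr do rewrite !ffunE scb.
case: ifP => hv; last first.
  apply: big1 => w _; case: eqP => [h|] //.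
  by move: hv; rewrite h inD_chi.
rewrite (bigD1 v) //= (bigD1 (flip v)) ?flip_neq //= big1 ?addr0.
  by rewrite !chiE hv inD_flip hv /= flipK eqxx.
move=> w /andP[h1 h2]; rewrite chiE; case: (inD w).
  by rewrite eq_sym (negbTE h1).
by case: eqP => [h|] //; rewrite h flipK eqxx in h2.
Qed.

Lemma sum_ind (T : finType) (P : pred T) (x : T) :
  \sum_(y | P y) ((x == y)%:R : rat) = (P x)%:R.
Proof.
case: (boolP (P x)) => h.
  rewrite (bigD1 x) //= eqxx big1 ?addr0 // => y /andP[_ ne].
  by rewrite eq_sym (negbTE ne).
by apply: big1 => y hy; case: eqP => // e; rewrite e hy in h.
Qed.

Lemma YBE J v : YB J v = (DesB v == J)%:R.
Proof. rewrite /YB sum_ffunE; under eq_bigr do rewrite ffunE; exact: sum_ind. Qed.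

Lemma YDE J v : YD J v = (inD v && (DesD v == J))%:R.
Proof. rewrite /YD sum_ffunE; under eq_bigr do rewrite ffunE; exact: sum_ind. Qed.

Lemma XBE J v : XB J v = (DesB v \subset J)%:R.
Proof.
rewrite /XB sum_ffunE; under eq_bigr do rewrite YBE.
exact: (sum_ind (fun I : {set _} => I \subset J) (DesB v)).
Qed.

Lemma XDE J v : XD J v = (inD v && (DesD v \subset J))%:R.
Proof.
rewrite /XD sum_ffunE; under eq_bigr do rewrite YDE.
case: (inD v) => /=; last by rewrite big1.
exact: (sum_ind (fun I : {set _} => I \subset J) (DesD v)).
Qed.

Lemma sum_sel (T : finType) (c : T -> rat) x :
  \sum_J (if x == J then c J else 0) = c x.
Proof.
rewrite (bigD1 x) //= eqxx big1 ?addr0 // => J /negbTE.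
by rewrite eq_sym => ->.
Qed.

Lemma SigmaB_E f : SigmaB f -> exists c : {set 'I_n} -> rat, forall v, f v = c (DesB v).
Proof.
case=> c ->; exists c => v; rewrite sum_ffunE.
under eq_bigr do rewrite ffunE YBE scb.
exact: sum_sel.
Qed.

Lemma SigmaD_I (f : GA n) (d : {set 'I_n} -> rat) :
  (forall v, f v = if inD v then d (DesD v) else 0) -> SigmaD f.
Proof.
move=> hf; exists d; apply/ffunP => v; rewrite hf sum_ffunE.
under eq_bigr do rewrite ffunE YDE scb.
case: (inD v) => /=; last by rewrite big1.
by rewrite sum_sel.
Qed.

Definition mk (a b : bool) (S : {set 'I_n}) : {set 'I_n} :=
  [set i : 'I_n | if nat_of_ord i == 0%N then a else if nat_of_ord i == 1%N then b else i \in S].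

Lemma mk_eq a b S a' b' S' : (mk a b S == mk a' b' S') =
  [&& a == a', b == b' & [forall i : 'I_n, (2 <= i)%N ==> ((i \in S) == (i \in S'))]].
Proof.
apply/eqP/and3P.
  move/setP => h; split.
  - by move: (h i0); rewrite !inE /= => ->.
  - by move: (h i1); rewrite !inE /= => ->.
  apply/forallP => i; apply/implyP => hi; move: (h i); rewrite !inE.
  have -> : (nat_of_ord i == 0%N) = false by apply/eqP; lia.
  have -> : (nat_of_ord i == 1%N) = false by apply/eqP; lia.
  by move=> ->.
case=> /eqP-> /eqP-> /forallP h; apply/setP => i; rewrite !inE.
have [//|h0] := eqVneq (nat_of_ord i) 0%N.
have [//|h1] := eqVneq (nat_of_ord i) 1%N.
have hi : (2 <= i)%N by lia.
by move/implyP: (h i) => /(_ hi)/eqP.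
Qed.

Lemma mk_sub a b S a' b' S' : (mk a b S \subset mk a' b' S') =
  [&& a ==> a', b ==> b' & [forall i : 'I_n, (2 <= i)%N ==> ((i \in S) ==> (i \in S'))]].
Proof.
apply/subsetP/and3P.
  move=> h; split.
  - by apply/implyP => ha; move: (h i0); rewrite !inE /=; apply.
  - by apply/implyP => ha; move: (h i1); rewrite !inE /=; apply.
  apply/forallP => i; apply/implyP => hi; apply/implyP => hS; move: (h i); rewrite !inE.
  have -> : (nat_of_ord i == 0%N) = false by apply/eqP; lia.
  have -> : (nat_of_ord i == 1%N) = false by apply/eqP; lia.
  by apply.
case=> /implyP ha /implyP hb /forallP h i; rewrite !inE.
have [_|h0] := eqVneq (nat_of_ord i) 0%N; first exact: ha.
have [_|h1] := eqVneq (nat_of_ord i) 1%N; first exact: hb.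
have hi : (2 <= i)%N by lia.
by move/implyP: (h i) => /(_ hi)/implyP.
Qed.

Lemma mk_i0 a b S : (i0 \in mk a b S) = a. Proof. by rewrite inE. Qed.
Lemma mk_i1 a b S : (i1 \in mk a b S) = b. Proof. by rewrite inE. Qed.
Lemma mk_mk a b c d S : mk a b (mk c d S) = mk a b S.
Proof.
apply/setP => i; rewrite !inE.
have [//|h0] := eqVneq (nat_of_ord i) 0%N.
have [//|h1] := eqVneq (nat_of_ord i) 1%N.
by [].
Qed.

Lemma DesB_mk u : DesB u = mk (wv u 1 < 0) (wv u 2 < wv u 1) (DesB u).
Proof.
apply/setP => i; rewrite !inE.
have [h0|h0] := eqVneq (nat_of_ord i) 0%N; first by rewrite h0.
have [h1|h1] := eqVneq (nat_of_ord i) 1%N; first by rewrite h1.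
by [].
Qed.

Lemma DesBflip_mk u : DesB (flip u) = mk (0 < wv u 1) (wv u 2 < - wv u 1) (DesB u).
Proof.
apply/setP => i; rewrite !inE !wv_flip.
have [h0|h0] := eqVneq (nat_of_ord i) 0%N; first by rewrite h0 /= oppr_lt0.
have [h1|h1] := eqVneq (nat_of_ord i) 1%N; first by rewrite h1.
by rewrite eqSS (negbTE h0).
Qed.

Lemma DesD_mk u : DesD u = mk (wv u 2 < - wv u 1) (wv u 2 < wv u 1) (DesB u).
Proof.
apply/setP => i; rewrite !inE.
have [h0|h0] := eqVneq (nat_of_ord i) 0%N; first by [].
have [h1|h1] := eqVneq (nat_of_ord i) 1%N; first by rewrite h1.
by [].
Qed.

Lemma wv1 u : wv u 1 = ent u i0. Proof. exact: (wv_ent u i0). Qed.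

Lemma wv1_neq0 u : wv u 1 != 0.
Proof. rewrite wv1; apply/eqP => h; move: (abs_ent u i0); rewrite h //. Qed.


Lemma s0z_big x : (2 <= `|x|)%N -> s0z x = x.
Proof.
move=> h; rewrite /s0z; case: ifP => // /orP[/eqP e|/eqP e]; move: h; rewrite e //.
Qed.

Lemma s0z_lt x y : (0 < `|x|)%N -> (0 < `|y|)%N -> `|x|%N != `|y|%N ->
  (s0z y < s0z x) = (y < x).
Proof.
move=> hx hy /eqP hxy; rewrite /s0z.
case: (boolP ((x == 1) || (x == -1))) => [/orP[/eqP ex|/eqP ex]|/norP[/eqP ex1 /eqP ex2]];
case: (boolP ((y == 1) || (y == -1))) => [/orP[/eqP ey|/eqP ey]|/norP[/eqP ey1 /eqP ey2]];
  apply/idP/idP => h; lia.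
Qed.

Lemma DesB_lflip v : nat_of_ord (v.1 i0) != 0%N -> DesB (lflip v) = DesB v.
Proof.
move=> hv; apply/setP => i; rewrite !inE !wv_lflip.
case: i => [[|j] hj]; rewrite wv_ent.
  have e : Ordinal hj = i0 by apply: val_inj.
  rewrite e /= (s0z_big (x := ent v i0)) // abs_ent; lia.
have hj' : (j < n)%N by apply: ltnW.
have -> : wv v (Ordinal hj) = ent v (Ordinal hj') by exact: (wv_ent v (Ordinal hj')).
apply: s0z_lt; rewrite ?abs_ent //.
apply/eqP => /eq_add_S /val_inj /perm_inj /(congr1 val) /=; lia.
Qed.

Lemma lflip_flip0 v : nat_of_ord (v.1 i0) == 0%N -> lflip v = flip v.
Proof.
move=> h; congr pair; apply/ffunP => i; rewrite !ffunE.
have -> : (nat_of_ord (v.1 i) == 0%N) = (nat_of_ord i == 0%N).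
  by rewrite -{1}(eqP h) val_eqE (inj_eq perm_inj) -[RHS]/(val i == val i0) val_eqE.
by [].
Qed.

Lemma flip_lflip v : flip (lflip v) = lflip (flip v).
Proof.
congr pair; apply/ffunP => i; rewrite !ffunE /=.
by case: (nat_of_ord i == 0%N); case: (nat_of_ord (v.1 i) == 0%N).
Qed.

Lemma Ginv (c : {set 'I_n} -> rat) v :
  c (DesB (lflip v)) + c (DesB (flip (lflip v))) = c (DesB v) + c (DesB (flip v)).
Proof.
have [h|h] := eqVneq (nat_of_ord (v.1 i0)) 0%N.
  by rewrite lflip_flip0 ?h // flipK addrC.
by rewrite flip_lflip (DesB_lflip h) (DesB_lflip (v := flip v) h).
Qed.

Lemma gmulE (f g : GA n) w :
  gmul f g w = \sum_(p : SP n * SP n | is_comp w p.1 p.2) f p.1 * g p.2.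
Proof. by rewrite ffunE. Qed.

Lemma morph (f g : GA n) (c : {set 'I_n} -> rat) :
  (forall v, g v = c (DesB v)) -> chiL (gmul f g) = gmul (chiL f) (chiL g).
Proof.
move=> hg; apply/ffunP => w; rewrite chiLE !gmulE.
have GI : forall v, g (lflip v) + g (flip (lflip v)) = g v + g (flip v).
  by move=> v; rewrite !hg Ginv.
under [RHS]eq_bigr do rewrite !chiLE.
case: ifP => hw; last first.
  symmetry; apply: big1 => p hp; case: ifP => h1; case: ifP => h2; rewrite ?mul0r ?mulr0 //.
  by move: hw; rewrite (inD_comp hp) h1 h2.
have inj1 : injective (fun p : SP n * SP n => (p.1, flip p.2)).
  by apply: (can_inj (g := fun p : SP n * SP n => (p.1, flip p.2))); case=> a b /=; rewrite flipK.
have inj2 : injective (fun p : SP n * SP n => (flip p.1, lflip p.2)).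
  by apply: (can_inj (g := fun p : SP n * SP n => (flip p.1, lflip p.2))); case=> a b /=; rewrite flipK lflipK.
rewrite [X in _ + X](reindex_inj inj1) /=.
under [X in _ + X]eq_bigl do rewrite comp_flip.
rewrite -big_split /=.
under eq_bigr do rewrite -mulrDr.
rewrite (bigID (fun p => inD p.1)) /=.
rewrite [X in _ + X](reindex_inj inj2) /=.
under [X in _ + X]eq_bigl do rewrite comp_lflip lflipK inD_flip negbK.
under [X in _ + X]eq_bigr do rewrite GI.
rewrite -big_split /=.
rewrite [RHS](bigID (fun p => inD p.1)) /= [X in _ + X]big1 ?addr0; last first.
  by move=> p /andP[_ /negbTE ->]; rewrite mul0r.
apply: eq_bigr => p /andP[hp h1].
have h2 : inD p.2 by move: hw; rewrite (inD_comp hp) h1; case: (inD p.2).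
by rewrite h1 h2 mulrDl.
Qed.


Lemma des3 u : exists a b c : bool,
  [/\ DesB u = mk a b (DesB u), DesB (flip u) = mk (~~ a) c (DesB u),
      DesD u = mk c b (DesB u), a -> b -> c & ~~ a -> c -> b].
Proof.
exists (wv u 1 < 0), (wv u 2 < wv u 1), (wv u 2 < - wv u 1); split.
- exact: DesB_mk.
- rewrite DesBflip_mk; congr mk; move/eqP: (wv1_neq0 u) => h.
  by apply/idP/idP => h'; [apply/negP => h''|]; lia.
- exact: DesD_mk.
- move=> h1 h2; lia.
- move/negP => h1 h2; apply/negPn/negP => h3; lia.
Qed.

Lemma mkJ (J : {set 'I_n}) : (forall i : 'I_n, i \in J -> (2 <= i)%N) ->
  [/\ J = mk false false J, sN 1 :|: J = mk false true J,
      sN 0 :|: J = mk true false J & sN 0 :|: sN 1 :|: J = mk true true J].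
Proof.
move=> hJ; split; apply/setP => i; rewrite !inE;
have [h0|h0] := eqVneq (nat_of_ord i) 0%N; have [h1|h1] := eqVneq (nat_of_ord i) 1%N => //=;
  try (by case: (boolP (i \in J)) => // /hJ; lia); lia.
Qed.

Lemma SigmaD_chiL (f : GA n) : SigmaB f -> SigmaD (chiL f).
Proof.
case/SigmaB_E => c hc.
apply: (SigmaD_I (d := fun K => let c0 := i0 \in K in let b := i1 \in K in
   let a := c0 && ~~ b in c (mk a b K) + c (mk (~~ a) c0 K))) => v.
rewrite chiLE; case: ifP => // hv; rewrite !hc.
have [a [b [cc [e1 e2 e3 H1 H2]]]] := des3 v.
rewrite e3 /= mk_i0 mk_i1 !mk_mk e2 e1 !mk_mk.
clear e1 e2 e3; move: H1 H2; case: a; case: b; case: cc => //= H1 H2; (try by rewrite addrC); (try by have := H1 isT isT); by have := H2 isT isT.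
Qed.

Lemma chiL_one : chiL (gone n) = gone n.
Proof.
apply/ffunP => v; rewrite chiLE /gone !ffunE.
have h1 : inD (sp1 n) by rewrite /inD /=; apply/negP; rewrite (_ : [set i | _] = set0) ?cards0 //; apply/setP => i; rewrite !inE ffunE.
case: ifP => hv.
  have -> : (flip v == sp1 n) = false.
    by apply/eqP => e; move: hv; rewrite -(flipK v) e inD_flip h1.
  by rewrite addr0.
by case: eqP => // e; rewrite e h1 in hv.
Qed.


Lemma Yforms (J : {set 'I_n}) : (forall i : 'I_n, i \in J -> (2 <= i)%N) ->
     [/\ chiL (YB J) = YD J,
         chiL (YB (sN 1 :|: J)) = YD (sN 0 :|: J) + YD (sN 1 :|: J) + YD (sN 0 :|: sN 1 :|: J),
         chiL (YB (sN 0 :|: J)) = YD J + YD (sN 0 :|: J) + YD (sN 1 :|: J) &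
         chiL (YB (sN 0 :|: sN 1 :|: J)) = YD (sN 0 :|: sN 1 :|: J)].
Proof.
move=> hJ; have [eJ e1 e0 e01] := mkJ hJ.
split; apply/ffunP => u; rewrite chiLE ?ffunE !YBE !YDE; case: ifP => hu /=;
  rewrite ?addr0 //; rewrite ?e01 ?e0 ?e1 eJ ?mk_mk;
  have [a [b [cc [E1 E2 E3 H1 H2]]]] := des3 u; rewrite E2 E3 E1 ?mk_mk !mk_eq;
  move: [forall i, _] => p; clear E1 E2 E3; move: H1 H2;
  case: a; case: b; case: cc; case: p => //= H1 H2; (try by have := H1 isT isT); (try by have := H2 isT isT).
Qed.

Lemma Xforms (J : {set 'I_n}) : (forall i : 'I_n, i \in J -> (2 <= i)%N) ->
     [/\ chiL (XB J) = XD J,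
         chiL (XB (sN 1 :|: J)) = XD (sN 0 :|: sN 1 :|: J),
         chiL (XB (sN 0 :|: J)) = XD (sN 0 :|: J) + XD (sN 1 :|: J) &
         chiL (XB (sN 0 :|: sN 1 :|: J)) = 2%:R *: XD (sN 0 :|: sN 1 :|: J)].
Proof.
move=> hJ; have [eJ e1 e0 e01] := mkJ hJ.
split; apply/ffunP => u; rewrite chiLE ?ffunE !XBE !XDE; case: ifP => hu /=;
  rewrite ?addr0 ?scaler0 //; rewrite ?e01 ?e0 ?e1 eJ ?mk_mk;
  have [a [b [cc [E1 E2 E3 H1 H2]]]] := des3 u; rewrite E2 E3 E1 ?mk_mk !mk_sub;
  move: [forall i, _] => p; clear E1 E2 E3; move: H1 H2;
  case: a; case: b; case: cc; case: p => //= H1 H2; (try by have := H1 isT isT); (try by have := H2 isT isT).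
Qed.

End S.

Unset Implicit Arguments.

Theorem proposition2p1 (n : nat) (hn : (2 <= n)%N) :
  (forall f : GA n, SigmaB f -> SigmaD (chiL f)) /\
  (forall f g : GA n, SigmaB f -> SigmaB g ->
     chiL (gmul f g) = gmul (chiL f) (chiL g)) /\
  chiL (gone n) = gone n /\
  (forall J : {set 'I_n}, (forall i : 'I_n, i \in J -> (2 <= i)%N) ->
     [/\ chiL (YB J) = YD J,
         chiL (YB (sN 1 :|: J)) = YD (sN 0 :|: J) + YD (sN 1 :|: J) + YD (sN 0 :|: sN 1 :|: J),
         chiL (YB (sN 0 :|: J)) = YD J + YD (sN 0 :|: J) + YD (sN 1 :|: J) &
         chiL (YB (sN 0 :|: sN 1 :|: J)) = YD (sN 0 :|: sN 1 :|: J)] /\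
     [/\ chiL (XB J) = XD J,
         chiL (XB (sN 1 :|: J)) = XD (sN 0 :|: sN 1 :|: J),
         chiL (XB (sN 0 :|: J)) = XD (sN 0 :|: J) + XD (sN 1 :|: J) &
         chiL (XB (sN 0 :|: sN 1 :|: J)) = 2%:R *: XD (sN 0 :|: sN 1 :|: J)]).

Proof.
have Hn : (1 < n)%N := hn.
split; first by move=> f; exact: (SigmaD_chiL Hn).
split; first by move=> f g _ /SigmaB_E [c hc]; exact: (morph Hn f hc).
split; first exact: (chiL_one Hn).
by move=> J hJ; split; [exact: (Yforms Hn hJ) | exact: (Xforms Hn hJ)].
Qed.
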